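(* Let $V=\{0,1\}^n$ with uniform measure $\mu$. For any partition $(A,B,W)$ of $V$ there is another partition $(A',B',W')$ of $V$ such that: (1) $\mu(A')=\mu(A)$, $\mu(B')=\mu(B)$, $\mu(W')=\mu(W)$; (2) $A'$ is increasing and $B'$ is decreasing; (3) $|\nabla_i(A,B)|\ge|\nabla_i(A',B')|$ for all $i\in[n]$.
   Context: $V$ carries the coordinatewise product order. $A\subseteq V$ is increasing if $x\in A$ and $y\ge x$ imply $y\in A$; decreasing is defined analogously with $y\le x$. For $x\in V$, $x^i$ is $x$ with coordinate $i$ flipped, and $\nabla_i(A,B)=\{(x,x^i): x\in A,\ x^i\in B\}$. *)

(* Defs.v *)
From HB Require Import structures.
From mathcomp Require Import all_boot all_order all_algebra.
Set Implicit Arguments. Unset Strict Implicit. Unset Printing Implicit Defensive.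
Import GRing.Theory Num.Theory.

(* The discrete cube V = {0,1}^n, points are finite functions 'I_n -> bool
   (false = 0, true = 1). *)
Definition cube (n : nat) := {ffun 'I_n -> bool}.

Definition cube_le n (x y : cube n) : bool := [forall i, x i ==> y i].

Definition increasing n (A : {set cube n}) : Prop :=
  forall x y : cube n, x \in A -> cube_le x y -> y \in A.

Definition decreasing n (A : {set cube n}) : Prop :=
  forall x y : cube n, x \in A -> cube_le y x -> y \in A.

Definition flip n (x : cube n) (i : 'I_n) : cube n :=
  [ffun j => if j == i then ~~ x j else x j].

Definition nabla n (i : 'I_n) (A B : {set cube n}) : {set cube n * cube n} :=
  [set p | [&& p.1 \in A, p.2 == flip p.1 i & p.2 \in B]].

Definition mu n (A : {set cube n}) : rat := (#|A|%:R / #|{: cube n}|%:R)%R.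

(* (A,B,W) is a partition of V: pairwise disjoint and covering V
   (parts may be empty) *)
Definition is_partition3 n (A B W : {set cube n}) : Prop :=
  [/\ [disjoint A & B], [disjoint A & W], [disjoint B & W]
    & A :|: B :|: W = [set: cube n]].

(* Main.v *)
Require Import Defs.
From HB Require Import structures.
From mathcomp Require Import all_boot all_order all_algebra.
From mathcomp Require Import zify.
Set Implicit Arguments. Unset Strict Implicit. Unset Printing Implicit Defensive.

Lemma flipK n (j : 'I_n) : involutive (fun x : cube n => flip x j).
Proof.
move=> x; apply/ffunP => k; rewrite !ffunE.
by case: (k == j) => //; rewrite negbK.
Qed.

Lemma flip_self n (x : cube n) j : flip x j j = ~~ x j.
Proof. by rewrite ffunE eqxx. Qed.

Lemma flip_other n (x : cube n) i j : j != i -> flip x i j = x j.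
Proof. by rewrite ffunE => /negbTE ->. Qed.

Lemma flipC n (x : cube n) i j : flip (flip x j) i = flip (flip x i) j.
Proof.
apply/ffunP => k; rewrite !ffunE.
by case: (k == i); case: (k == j).
Qed.

Lemma sum_pair n j (h : cube n -> nat) :
  (\sum_x h x).*2 = \sum_x (h x + h (flip x j)).
Proof.
rewrite big_split /= -addnn; congr (_ + _).
exact: (reindex_inj (inv_inj (@flipK n j))).
Qed.

Lemma card_sum (T : finType) (P : pred T) : #|[set x | P x]| = \sum_x (P x : nat).
Proof.
rewrite -sum1_card big_mkcond /=; apply: eq_bigr => x _.
by rewrite inE; case: (P x).
Qed.

Definition comp n (j : 'I_n) (f : cube n -> nat) (x : cube n) : nat :=
  if x j then maxn (f x) (f (flip x j)) else minn (f x) (f (flip x j)).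

Definition cnt n k (f : cube n -> nat) := #|[set x | f x == k]|.
Definition E n (i : 'I_n) (f : cube n -> nat) :=
  #|[set x | (f x == 2) && (f (flip x i) == 0)]|.
Definition wt n (x : cube n) : nat := \sum_k (x k : nat).
Definition P n (f : cube n -> nat) := \sum_x (f x * wt x).

Lemma comp_flip n j (f : cube n -> nat) (x : cube n) :
  comp j f (flip x j) = if x j then minn (f x) (f (flip x j))
                        else maxn (f x) (f (flip x j)).
Proof.
rewrite /comp flip_self flipK.
by case: (x j) => /=; [rewrite minnC | rewrite maxnC].
Qed.

Lemma comp_lt3 n j (f : cube n -> nat) : (forall x, f x < 3) -> forall x, comp j f x < 3.
Proof.
move=> hf x; rewrite /comp; have := hf x; have := hf (flip x j).
case: (x j); lia.
Qed.

Lemma maxmin_eq (a b k : nat) :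
  (maxn a b == k) + (minn a b == k) = (a == k) + (b == k).
Proof.
by case: leqP => _; rewrite // addnC.
Qed.

Lemma cnt_comp n j k (f : cube n -> nat) : cnt k (comp j f) = cnt k f.
Proof.
apply: double_inj; rewrite /cnt !card_sum !(sum_pair j).
apply: eq_bigr => x _; rewrite comp_flip /comp.
case: (x j) => //; first exact: maxmin_eq.
by rewrite addnC maxmin_eq addnC.
Qed.

Lemma key (a b c d : nat) : a < 3 -> b < 3 -> c < 3 -> d < 3 ->
  ((maxn a b == 2) && (maxn c d == 0)) + ((minn a b == 2) && (minn c d == 0))
  <= ((a == 2) && (c == 0)) + ((b == 2) && (d == 0)).
Proof.
by case: a => [|[|[|a]]] //; case: b => [|[|[|b]]] //;
   case: c => [|[|[|c]]] //; case: d => [|[|[|d]]].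
Qed.

Lemma sym_eq (a b : nat) :
  ((maxn a b == 2) && (minn a b == 0)) + ((minn a b == 2) && (maxn a b == 0))
  = ((a == 2) && (b == 0)) + ((b == 2) && (a == 0)).
Proof.
by case: leqP => _; rewrite // addnC.
Qed.

Lemma E_comp n i j (f : cube n -> nat) : (forall x, f x < 3) ->
  E i (comp j f) <= E i f.
Proof.
move=> hf; rewrite -leq_double /E !card_sum !(sum_pair j).
apply: leq_sum => x _.
have [<-|hij] := eqVneq i j.
  rewrite flipK comp_flip /comp.
  case: (x i) => /=; first by rewrite sym_eq.
  by rewrite [X in X <= _]addnC sym_eq addnC.
have hji : j != i by rewrite eq_sym.
rewrite (comp_flip j f x) flipC (comp_flip j f (flip x i)) /comp (flip_other x hji).
have := hf x; have := hf (flip x j); have := hf (flip x i);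
  have := hf (flip (flip x i) j).
case: (x j) => h1 h2 h3 h4 /=.
  exact: key.
rewrite [X in X <= _]addnC (addnC ((f x == 2) && _)).
by rewrite maxnC [maxn (f (flip x i)) _]maxnC minnC [minn (f (flip x i)) _]minnC; apply: key.
Qed.

Lemma wt_flip n (x : cube n) j : wt (flip x j) + x j = wt x + ~~ x j.
Proof.
rewrite /wt (bigD1 j) // [in RHS](bigD1 j) //= flip_self.
rewrite (eq_bigr (fun k => (x k : nat))) => [|k hk]; last by rewrite flip_other.
rewrite addnAC [RHS]addnAC [~~ x j + _]addnC; reflexivity.
Qed.


Lemma q_le n j (f : cube n -> nat) (x : cube n) :
  f x * wt x + f (flip x j) * wt (flip x j) <=
  comp j f x * wt x + comp j f (flip x j) * wt (flip x j).
Proof.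
rewrite comp_flip /comp; have hw := wt_flip x j.
case: (x j) hw => /= hw; case: leqP => h; nia.
Qed.

Lemma q_lt n j (f : cube n -> nat) (x : cube n) : ~~ x j -> f (flip x j) < f x ->
  f x * wt x + f (flip x j) * wt (flip x j) <
  comp j f x * wt x + comp j f (flip x j) * wt (flip x j).
Proof.
move=> hx hlt; rewrite comp_flip /comp; have hw := wt_flip x j.
rewrite (negbTE hx) in hw *; rewrite /= in hw *.
case: leqP => h; nia.
Qed.

Lemma main n (f : cube n -> nat) : (forall x, f x < 3) ->
  exists g : cube n -> nat, [/\ forall x, g x < 3, forall k, cnt k g = cnt k f,
     forall i, E i g <= E i f & forall (x : cube n) j, ~~ x j -> g x <= g (flip x j)].
Proof.
move=> hf0. pose Bd := \sum_(x : cube n) (2 * wt x).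
have hB : forall g : cube n -> nat, (forall x, g x < 3) -> P g <= Bd.
  by move=> g hg; apply: leq_sum => x _; rewrite leq_mul2r -ltnS hg orbT.
suff: forall k f, (forall x, f x < 3) -> Bd - P f < k -> exists g : cube n -> nat,
  [/\ forall x, g x < 3, forall k, cnt k g = cnt k f,
     forall i, E i g <= E i f & forall (x : cube n) j, ~~ x j -> g x <= g (flip x j)].
  by move=> H; apply: (H (Bd - P f).+1).
clear hf0; elim => [//|k IH] {}f hf hk.
have [srt|] := boolP [forall x : cube n, forall j : 'I_n, ~~ x j ==> (f x <= f (flip x j))].
  exists f; split=> // x j hx.
  exact: (implyP (forallP (forallP srt x) j) hx).
move/forallPn => [x0 /forallPn [j0]]; rewrite negb_imply -ltnNge => /andP [hx0 hlt].
have hg := comp_lt3 j0 hf.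
have hP : P f < P (comp j0 f).
  rewrite -ltn_double /P !(sum_pair j0).
  rewrite (bigD1 x0) //= [X in _ < X](bigD1 x0) //=.
  have h1 := q_lt hx0 hlt.
  have h2 : \sum_(i | i != x0) (f i * wt i + f (flip i j0) * wt (flip i j0)) <=
     \sum_(i | i != x0) (comp j0 f i * wt i + comp j0 f (flip i j0) * wt (flip i j0)).
    by apply: leq_sum => x _; apply: q_le.
  by rewrite -addSn; apply: leq_add.
have [g [g1 g2 g3 g4]] : exists g : cube n -> nat,
  [/\ forall x, g x < 3, forall k, cnt k g = cnt k (comp j0 f),
     forall i, E i g <= E i (comp j0 f) & forall (x : cube n) j, ~~ x j -> g x <= g (flip x j)].
  by apply: IH => //; have := hB _ hg; lia.
exists g; split => // [k'|i]; first by rewrite g2 cnt_comp.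
exact: leq_trans (g3 i) (E_comp _ _ hf).
Qed.

Lemma sorted_mono n (g : cube n -> nat) :
  (forall (x : cube n) j, ~~ x j -> g x <= g (flip x j)) ->
  forall x y, cube_le x y -> g x <= g y.
Proof.
move=> hs.
suff: forall d (x y : cube n), #|[set i | x i != y i]| = d -> cube_le x y -> g x <= g y.
  by move=> H x y; apply: H.
elim => [|d IH] x y hd hle.
  have -> : x = y; last by [].
  apply/ffunP => i; apply/eqP; apply: contraT => hne.
  have : i \in [set i | x i != y i] by rewrite inE.
  by rewrite (cards0_eq hd) inE.
have [i] : exists i, i \in [set i | x i != y i].
  by apply/set0Pn; rewrite -card_gt0 hd.
rewrite inE => hne.
have hxy := forallP hle i.
have hxi : ~~ x i by move: hne hxy; case: (x i); case: (y i).
have hyi : y i by move: hne hxy; case: (x i); case: (y i).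
apply: leq_trans (hs x i hxi) (IH _ y _ _).
  move: hd; rewrite (cardsD1 i) inE hne add1n => -[<-].
  apply: eq_card => k; rewrite !inE ffunE.
  case: (eqVneq k i) => [->|hki] /=; last by [].
  by rewrite hyi (negbTE hxi).
apply/forallP => k; rewrite ffunE; case: eqP => [->|_].
  by rewrite hyi implybT.
exact: (forallP hle k).
Qed.

Lemma card_nabla n i (A B : {set cube n}) :
  #|nabla i A B| = #|[set x | (x \in A) && (flip x i \in B)]|.
Proof.
have -> : nabla i A B = (fun x => (x, flip x i)) @: [set x | (x \in A) && (flip x i \in B)].
  apply/setP => -[x y]; rewrite inE /=; apply/and3P/imsetP.
    by move=> [hA /eqP -> hB]; exists x; rewrite // inE hA hB.
  by move=> [z]; rewrite inE => /andP [hA hB] [-> ->].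
by apply: card_imset => x y [].
Qed.

Theorem proposition3p4 (n : nat) (A B W : {set cube n}) :
  is_partition3 A B W ->
  exists A' B' W' : {set cube n},
    [/\ is_partition3 A' B' W',
        [/\ mu A' = mu A, mu B' = mu B & mu W' = mu W],
        increasing A' /\ decreasing B'
      & forall i : 'I_n, #|nabla i A' B'| <= #|nabla i A B|].
Proof.
move=> [dAB dAW dBW cov].
pose f0 := fun x : cube n => if x \in A then 2 else if x \in B then 0 else 1.
have hf0 : forall x, f0 x < 3 by move=> x; rewrite /f0; case: (x \in A); case: (x \in B).
have hA : [set x | f0 x == 2] = A.
  apply/setP => x; rewrite inE /f0; case: ifP => // _; by case: ifP.
have hB : [set x | f0 x == 0] = B.
  apply/setP => x; rewrite inE /f0; case: ifP => hx.
    by rewrite (disjointFr dAB hx).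
  by case: ifP.
have hW : [set x | f0 x == 1] = W.
  apply/setP => x; rewrite inE /f0.
  have : x \in A :|: B :|: W by rewrite cov inE.
  rewrite !inE; case: ifP => hx.
    by rewrite (disjointFr dAW hx).
  case: ifP => hy /=; first by rewrite (disjointFr dBW hy).
  by [].
have [g [g1 g2 g3 g4]] := main hf0.
exists [set x | g x == 2], [set x | g x == 0], [set x | g x == 1].
split.
- split.
  + by rewrite disjoints_subset; apply/subsetP => x; rewrite !inE => /eqP ->.
  + by rewrite disjoints_subset; apply/subsetP => x; rewrite !inE => /eqP ->.
  + by rewrite disjoints_subset; apply/subsetP => x; rewrite !inE => /eqP ->.
  + apply/setP => x; rewrite !inE; have := g1 x.
    by case: (g x) => [|[|[|]]].
- split; rewrite /mu; congr (_ / _)%R; congr (_%:R)%R;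
    [rewrite -hA | rewrite -hB | rewrite -hW]; exact: g2.
- split.
  + move=> x y; rewrite !inE => /eqP hx hle.
    have := sorted_mono g4 hle; have := g1 y; rewrite hx; lia.
  + move=> x y; rewrite !inE => /eqP hx hle.
    have := sorted_mono g4 hle; rewrite hx; lia.
- move=> i; rewrite -hA -hB !card_nabla.
  have := g3 i; rewrite /E.
  suff H : forall h : cube n -> nat,
     #|[set x | (x \in [set x0 | h x0 == 2]) && (flip x i \in [set x0 | h x0 == 0])]|
     = #|[set x | (h x == 2) && (h (flip x i) == 0)]|.
    by rewrite !H.
  by move=> h; apply: eq_card => x; rewrite !inE.
Qed.
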